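(* Let $A$ be a meet-complemented lattice in which $\Box x$ and $\Diamond x$ exist for every $x\in A$. Then the following are equivalent: (i) $\Diamond\Box a\le\Box a$ for all $a\in A$; (ii) $\Diamond a\le\Box\Diamond a$ for all $a\in A$.
   Context: A meet-complemented lattice is a lattice $(L,\le)$ (not necessarily distributive) such that for every $a\in L$ the element $\neg a=\max\{b\in L: a\wedge b\le c\ \text{for all } c\in L\}$ exists; it is bounded with bottom $0$ and top $1$. For $a\in L$, $\Box a=\max\{b\in L: a\vee\neg b=1\}$ and $\Diamond a=\min\{b\in L: \neg a\vee b=1\}$. *)

(* Defs.v *)
From HB Require Import structures.
From mathcomp Require Import all_boot all_order.
Set Implicit Arguments. Unset Strict Implicit. Unset Printing Implicit Defensive.
Import Order.TTheory.
Local Open Scope order_scope.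

Definition is_max {d} {L : porderType d} (P : L -> Prop) (m : L) : Prop :=
  P m /\ forall b, P b -> b <= m.
Definition is_min {d} {L : porderType d} (P : L -> Prop) (m : L) : Prop :=
  P m /\ forall b, P b -> m <= b.

Definition is_meet_compl {d} {L : tbLatticeType d} (neg : L -> L) : Prop :=
  forall a, is_max (fun b => forall c : L, a `&` b <= c) (neg a).

Definition is_box {d} {L : tbLatticeType d} (neg box : L -> L) : Prop :=
  forall a, is_max (fun b => a `|` neg b = \top) (box a).

Definition is_diamond {d} {L : tbLatticeType d} (neg dia : L -> L) : Prop :=
  forall a, is_min (fun b => neg a `|` b = \top) (dia a).

(* Main.v *)
Require Import Defs.
From HB Require Import structures.
From mathcomp Require Import all_boot all_order.
Import Order.TTheory.
Local Open Scope order_scope.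

Theorem proposition19 (d : Order.disp_t) (A : tbLatticeType d)
  (neg box dia : A -> A)
  (Hneg : is_meet_compl neg) (Hbox : is_box neg box) (Hdia : is_diamond neg dia) :
  (forall a : A, dia (box a) <= box a) <-> (forall a : A, dia a <= box (dia a)).
Proof.
have anti : forall b c : A, b <= c -> neg c <= neg b.
  move=> b c bc; apply: (proj2 (Hneg b)) => x.
  apply: le_trans (proj1 (Hneg c) x).
  by rewrite lexI leIr andbT; apply: le_trans bc; apply: leIl.
have top_up : forall x y z : A, x `|` y = \top -> y <= z -> x `|` z = \top.
  move=> x y z H yz; apply/eqP; rewrite eq_le lex1 /= -H.
  by rewrite leUx leUl /=; apply: le_trans yz (leUr _ _).
have adj : forall a b : A, (dia b <= a) <-> (b <= box a).
  move=> a b; split=> H.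
    apply: (proj2 (Hbox a)); rewrite joinC.
    exact: top_up (proj1 (Hdia b)) H.
  apply: (proj2 (Hdia b)); rewrite joinC.
  exact: top_up (proj1 (Hbox a)) (anti _ _ H).
have dbox : forall a, dia (box a) <= a by move=> a; apply/adj.
have udia : forall a, a <= box (dia a) by move=> a; apply/adj.
have dmono : forall x y, x <= y -> dia x <= dia y.
  by move=> x y xy; apply/adj; apply: le_trans xy (udia y).
split=> H a.
- apply/(adj (dia a) (dia a)).
  apply: (le_trans (dmono _ _ (dmono _ _ (udia a))) _).
  apply/(adj (dia a)); exact: H.
- apply/(adj a).
  apply: (le_trans _ (dbox a)).
  apply/(adj (dia (box a))); exact: H.
Qed.
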